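(* Let $M(C,\bar\xi,\pi)$ be a Myller configuration in $E^3$ with Darboux frame $(\bar\xi,\bar\mu,\bar v)$ and invariants $G,K,T$ (notation in the context), and assume $(G(s),K(s))\neq(0,0)$ for all $s$. Define $$\sigma_\xi=\frac{K^{2}\left(\frac{G}{K}\right)'-(G^{2}+K^{2})T}{(G^{2}+K^{2})^{3/2}},$$ where $K^2\left(\frac{G}{K}\right)'$ stands for $G'K-GK'$. Then $C$ is a $\bar\xi$-helix in $M$ if and only if $\sigma_\xi$ is constant; in that case the constant angle $\theta$ between $\bar\xi$ and the fixed axis satisfies $\cot\theta=\mp\sigma_\xi$ (for an appropriate choice of sign).
   Context: Let $C$ be a smooth curve in Euclidean 3-space $E^3$ parametrized by arclength $s\in I$; primes denote $d/ds$. A Myller configuration $M(C,\bar\xi,\pi)$ consists of a smooth unit vector field (versor field) $\bar\xi(s)$ along $C$ and a smooth field of oriented planes $\pi(s)$ along $C$ with $\bar\xi(s)\in\pi(s)$. Let $\bar v(s)$ be the unit normal of the oriented plane $\pi(s)$ and $\bar\mu=\bar v\times\bar\xi$. The Darboux frame $(\bar\xi,\bar\mu,\bar v)$ is a positively oriented orthonormal frame satisfying $\bar\xi'=G\bar\mu+K\bar v$, $\bar\mu'=-G\bar\xi+T\bar v$, $\bar v'=-K\bar\xi-T\bar\mu$, where the smooth functions $G,K,T$ are called the geodesic curvature, normal curvature and geodesic torsion of $(C,\bar\xi)$ in $M$. The curve $C$ is called a $\bar\xi$-helix in $M$ if there exist a fixed (constant) unit vector $\bar d_\xi$ and a constant $\theta$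 with $\langle\bar\xi(s),\bar d_\xi\rangle=\cos\theta$ for all $s$. *)

(* Defs.v *)
From Stdlib Require Import Reals.
From Coquelicot Require Import Coquelicot.
Open Scope R_scope.

Definition R3 : Type := (R * R * R)%type.
Definition v1 (u : R3) : R := fst (fst u).
Definition v2 (u : R3) : R := snd (fst u).
Definition v3 (u : R3) : R := snd u.
Definition mk3 (x y z : R) : R3 := (x, y, z).

Definition vadd (u w : R3) : R3 := mk3 (v1 u + v1 w) (v2 u + v2 w) (v3 u + v3 w).
Definition vscal (c : R) (u : R3) : R3 := mk3 (c * v1 u) (c * v2 u) (c * v3 u).
Definition dot (u w : R3) : R := v1 u * v1 w + v2 u * v2 w + v3 u * v3 w.
Definition cross (u w : R3) : R3 :=
  mk3 (v2 u * v3 w - v3 u * v2 w)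
      (v3 u * v1 w - v1 u * v3 w)
      (v1 u * v2 w - v2 u * v1 w).
Definition det3 (u w z : R3) : R := dot u (cross w z).

Definition in_I (a b : Rbar) (s : R) : Prop := Rbar_lt a s /\ Rbar_lt s b.

Definition smooth_on (a b : Rbar) (f : R -> R) : Prop :=
  forall (n : nat) (s : R), in_I a b s -> ex_derive (Derive_n f n) s.

Definition vsmooth_on (a b : Rbar) (f : R -> R3) : Prop :=
  smooth_on a b (fun t => v1 (f t)) /\ smooth_on a b (fun t => v2 (f t)) /\
  smooth_on a b (fun t => v3 (f t)).

Definition vis_derive (f : R -> R3) (s : R) (v : R3) : Prop :=
  is_derive (fun t => v1 (f t)) s (v1 v) /\
  is_derive (fun t => v2 (f t)) s (v2 v) /\
  is_derive (fun t => v3 (f t)) s (v3 v).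

(* Darboux frame (xi, mu, nu) of a Myller configuration M(C, xi, pi) with
   invariants G (geodesic curvature), K (normal curvature), T (geodesic
   torsion): nu is the unit normal of the oriented plane pi, xi a unit vector
   in pi, mu = nu x xi, the frame is positively oriented orthonormal, and the
   Darboux derivative formulas hold. *)
Definition Darboux_frame (a b : Rbar) (xi mu nu : R -> R3) (G K T : R -> R) : Prop :=
  vsmooth_on a b xi /\ vsmooth_on a b mu /\ vsmooth_on a b nu /\
  smooth_on a b G /\ smooth_on a b K /\ smooth_on a b T /\
  forall s, in_I a b s ->
    dot (xi s) (xi s) = 1 /\ dot (mu s) (mu s) = 1 /\ dot (nu s) (nu s) = 1 /\
    dot (xi s) (mu s) = 0 /\ dot (xi s) (nu s) = 0 /\ dot (mu s) (nu s) = 0 /\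
    mu s = cross (nu s) (xi s) /\
    det3 (xi s) (mu s) (nu s) = 1 /\
    vis_derive xi s (vadd (vscal (G s) (mu s)) (vscal (K s) (nu s))) /\
    vis_derive mu s (vadd (vscal (- G s) (xi s)) (vscal (T s) (nu s))) /\
    vis_derive nu s (vadd (vscal (- K s) (xi s)) (vscal (- T s) (mu s))).

Definition xi_helix_axis (a b : Rbar) (xi : R -> R3) (d : R3) (theta : R) : Prop :=
  dot d d = 1 /\ forall s, in_I a b s -> dot (xi s) d = cos theta.

Definition xi_helix (a b : Rbar) (xi : R -> R3) : Prop :=
  exists (d : R3) (theta : R), xi_helix_axis a b xi d theta.

Definition sigma_xi (G K T : R -> R) (s : R) : R :=
  (Derive G s * K s - G s * Derive K s - (G s ^ 2 + K s ^ 2) * T s)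
  / Rpower (G s ^ 2 + K s ^ 2) (3 / 2).

(* Main.v *)
Require Import Defs.
From Stdlib Require Import Reals Lra.
From Coquelicot Require Import Coquelicot.
Open Scope R_scope.

Lemma I_conv a b x y z : in_I a b x -> in_I a b y -> x <= z <= y -> in_I a b z.
Proof. unfold in_I; destruct a, b; simpl; intuition lra. Qed.

Lemma I_nonempty a b : Rbar_lt a b -> exists s, in_I a b s.
Proof.
  unfold in_I; destruct a as [a| |], b as [b| |]; simpl; intros H; try tauto.
  - exists ((a+b)/2); lra.
  - exists (a+1); lra.
  - exists (b-1); lra.
  - exists 0; tauto.
Qed.

Lemma locally_I a b s : in_I a b s -> locally s (in_I a b).
Proof.
  intros H. apply (open_and (T:=R_UniformSpace) (fun u : R => Rbar_lt a u) (fun u : R => Rbar_lt u b)).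
  apply open_Rbar_gt. apply open_Rbar_lt. exact H.
Qed.

Lemma const_on_I a b f : (forall t, in_I a b t -> is_derive f t 0) ->
  forall s t, in_I a b s -> in_I a b t -> f s = f t.
Proof.
  intros Hd s t Hs Ht.
  destruct (MVT_gen f s t (fun _ => 0)) as [c [_ Hc]].
  - intros x Hx. apply Hd. apply (I_conv a b (Rmin s t) (Rmax s t)).
    + unfold Rmin; destruct Rle_dec; auto.
    + unfold Rmax; destruct Rle_dec; auto.
    + lra.
  - intros x Hx. apply continuity_pt_filterlim. apply (ex_derive_continuous (K:=R_AbsRing) (V:=R_NormedModule) f x).
    exists 0. apply Hd. apply (I_conv a b (Rmin s t) (Rmax s t)).
    + unfold Rmin; destruct Rle_dec; auto.
    + unfold Rmax; destruct Rle_dec; auto.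
    + lra.
  - lra.
Qed.

Lemma deriv_of_const a b f c s l : (forall t, in_I a b t -> f t = c) -> in_I a b s ->
  is_derive f s l -> l = 0.
Proof.
  intros Hc Hs Hd.
  assert (H2 : is_derive (fun _ : R => c) s l).
  { apply (is_derive_ext_loc f). 2: exact Hd.
    generalize (locally_I a b s Hs). apply filter_imp. intros; auto. }
  apply is_derive_unique in H2. rewrite <- H2. apply is_derive_unique.
  apply (is_derive_const c s).
Qed.

Lemma der_mulc (f : R -> R) s l c : is_derive f s l -> is_derive (fun t => f t * c) s (l*c).
Proof.
  intros H. replace (l*c) with (l*c + f s * 0) by ring.
  apply (is_derive_mult f (fun _ => c)); auto. apply (is_derive_const c s).
  intros; apply Rmult_comm.
Qed.

Lemma dot_derive (u : R -> R3) s u' d : vis_derive u s u' ->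
  is_derive (fun t => dot (u t) d) s (dot u' d).
Proof.
  intros [H1 [H2 H3]]. unfold dot.
  apply (is_derive_plus (fun t => v1 (u t) * v1 d + v2 (u t) * v2 d)).
  apply (is_derive_plus (fun t => v1 (u t) * v1 d)).
  all: apply der_mulc; assumption.
Qed.

Lemma parseval (d x y : R3) :
  (dot d (cross y x))^2 = dot d d * dot y y * dot x x + 2 * dot d y * dot y x * dot x d
   - dot d d * (dot y x)^2 - dot y y * (dot d x)^2 - dot x x * (dot d y)^2.
Proof.
  destruct d as [[d1 d2] d3], x as [[x1 x2] x3], y as [[y1 y2] y3].
  unfold dot, cross, mk3, v1, v2, v3; simpl. ring.
Qed.

Lemma Rpower32 x : 0 < x -> Rpower x (3/2) = x * sqrt x.
Proof.
  intros Hx. replace (3/2) with (1 + /2) by field.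
  rewrite Rpower_plus, Rpower_1, Rpower_sqrt; auto.
Qed.
Lemma alpha_der (p q G K : R->R) s p' q' g' k' c T: is_derive p s p' -> is_derive q s q' ->
  is_derive G s g' -> is_derive K s k' -> G s <> 0 \/ K s <> 0 ->
  G s * p s + K s * q s = 0 -> p' = -G s * c + T*q s -> q' = -K s*c - T*p s ->
  is_derive (fun t => (p t * K t - q t * G t) / sqrt (G t^2 + K t^2)) s 0.
Proof.
  intros Hp Hq HG HK Hnz E1 Ep Eq.
  assert (Hpos : 0 < G s ^ 2 + K s ^ 2).
  { destruct Hnz as [H|H]; [assert (0 < G s ^2) by (apply pow2_gt_0; auto); nra|
      assert (0 < K s ^2) by (apply pow2_gt_0; auto); nra]. }
  auto_derive.
  - repeat split; try (eexists; eassumption); try nra.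
    apply Rgt_not_eq, sqrt_lt_R0; nra.
  - repeat match goal with |- context [Derive ?f s] =>
      let e := fresh "e" in set (e := Derive f s);
      first [ replace e with p' by (symmetry; exact (is_derive_unique _ _ _ Hp))
            | replace e with q' by (symmetry; exact (is_derive_unique _ _ _ Hq))
            | replace e with g' by (symmetry; exact (is_derive_unique _ _ _ HG))
            | replace e with k' by (symmetry; exact (is_derive_unique _ _ _ HK)) ]
    end.
    subst p' q'.
    replace (G s * (G s * 1) + K s * (K s * 1)) with (G s ^ 2 + K s ^ 2) by ring.
    assert (HN := sqrt_lt_R0 _ Hpos).
    assert (HN2 := sqrt_sqrt _ (Rlt_le _ _ Hpos)).
    set (N := sqrt (G s ^ 2 + K s ^ 2)) in *.
    field_simplify; [|lra].
    assert (HN2' : N^2 = G s^2+K s^2) by (rewrite <- HN2; ring). rewrite HN2'.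
    unfold Rdiv; apply Rmult_eq_0_compat_r.
    transitivity (2*(G s*k' - K s*g' + T*(G s^2+K s^2)) * (G s * p s + K s * q s)); [ring| rewrite E1; ring].
Qed.
Lemma comp_der (x m n G K : R->R) T s c g' k' a0 :
  is_derive x s (G s * m s + K s * n s) -> is_derive m s (-G s * x s + T * n s) ->
  is_derive n s (-K s * x s - T * m s) -> is_derive G s g' -> is_derive K s k' ->
  (G s <> 0 \/ K s <> 0) ->
  (g' * K s - G s * k' - (G s^2 + K s^2) * T) / ((G s^2+K s^2) * sqrt(G s^2+K s^2)) = c ->
  is_derive (fun t => c*a0 * x t + a0 * K t / sqrt(G t^2+K t^2) * m t
      + (- a0 * G t / sqrt(G t^2 + K t^2)) * n t) s 0.
Proof.
  intros Hx Hm Hn HG HK Hnz Hc.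
  assert (Hpos : 0 < G s ^ 2 + K s ^ 2).
  { destruct Hnz as [H|H]; [assert (0 < G s ^2) by (apply pow2_gt_0; auto); nra|
      assert (0 < K s ^2) by (apply pow2_gt_0; auto); nra]. }
  auto_derive.
  1: (repeat split; try (eexists; eassumption); try (apply Rgt_not_eq, sqrt_lt_R0); nra).
  repeat match goal with |- context [Derive ?f s] =>
      let e := fresh "e" in set (e := Derive f s);
      first [ replace e with (G s * m s + K s * n s) by (symmetry; exact (is_derive_unique _ _ _ Hx))
            | replace e with (-G s * x s + T * n s) by (symmetry; exact (is_derive_unique _ _ _ Hm))
            | replace e with (-K s * x s - T * m s) by (symmetry; exact (is_derive_unique _ _ _ Hn))
            | replace e with g' by (symmetry; exact (is_derive_unique _ _ _ HG))
            | replace e with k' by (symmetry; exact (is_derive_unique _ _ _ HK)) ]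
    end.
    replace (G s * (G s * 1) + K s * (K s * 1)) with (G s ^ 2 + K s ^ 2) by ring.
    assert (HN := sqrt_lt_R0 _ Hpos).
    assert (HN2 := sqrt_sqrt _ (Rlt_le _ _ Hpos)).
    set (N := sqrt (G s ^ 2 + K s ^ 2)) in *.
    subst c.
    assert (HN2' : N^2 = G s^2+K s^2) by (rewrite <- HN2; ring).
    field_simplify; [rewrite HN2'; unfold Rdiv; apply Rmult_eq_0_compat_r; ring | split; lra].
Qed.

Lemma dot_lin u w a c d : dot (vadd (vscal a u) (vscal c w)) d = a * dot u d + c * dot w d.
Proof. unfold dot, vadd, vscal, mk3, v1, v2, v3; simpl; ring. Qed.
Lemma dot_comm u w : dot u w = dot w u.
Proof. unfold dot; ring. Qed.

Lemma der_mul (f g : R -> R) s f' g' : is_derive f s f' -> is_derive g s g' ->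
  is_derive (fun t => f t * g t) s (f' * g s + f s * g').
Proof. intros. apply (is_derive_mult f g); auto. intros; apply Rmult_comm. Qed.
Lemma der_plus (f g : R -> R) s f' g' : is_derive f s f' -> is_derive g s g' ->
  is_derive (fun t => f t + g t) s (f' + g').
Proof. intros. apply (is_derive_plus f g); auto. Qed.

Lemma frame_at a b xi mu nu G K T s : Darboux_frame a b xi mu nu G K T -> in_I a b s ->
    dot (xi s) (xi s) = 1 /\ dot (mu s) (mu s) = 1 /\ dot (nu s) (nu s) = 1 /\
    dot (xi s) (mu s) = 0 /\ dot (xi s) (nu s) = 0 /\ dot (mu s) (nu s) = 0 /\
    mu s = cross (nu s) (xi s) /\
    det3 (xi s) (mu s) (nu s) = 1 /\
    vis_derive xi s (vadd (vscal (G s) (mu s)) (vscal (K s) (nu s))) /\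
    vis_derive mu s (vadd (vscal (- G s) (xi s)) (vscal (T s) (nu s))) /\
    vis_derive nu s (vadd (vscal (- K s) (xi s)) (vscal (- T s) (mu s))).
Proof. intros (_&_&_&_&_&_&H) Hs. exact (H s Hs). Qed.

Lemma frame_GK a b xi mu nu G K T s : Darboux_frame a b xi mu nu G K T -> in_I a b s ->
  is_derive G s (Derive G s) /\ is_derive K s (Derive K s).
Proof.
  intros (_&_&_&HG&HK&_) Hs. split; apply Derive_correct.
  exact (HG 0%nat s Hs). exact (HK 0%nat s Hs).
Qed.

Section Fwd.
Variables (a b : Rbar) (xi mu nu : R -> R3) (G K T : R -> R) (d : R3) (th : R).
Hypothesis HF : Darboux_frame a b xi mu nu G K T.
Hypothesis Hax : xi_helix_axis a b xi d th.
Let p t := dot (mu t) d.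
Let q t := dot (nu t) d.

Lemma fE1 s : in_I a b s -> G s * p s + K s * q s = 0.
Proof.
  intros Hs. destruct (frame_at _ _ _ _ _ _ _ _ s HF Hs) as (_&_&_&_&_&_&_&_&Dxi&_).
  pose proof (dot_derive xi s _ d Dxi) as H0; revert H0. rewrite dot_lin. intros H.
  apply (deriv_of_const a b _ (cos th) s) in H; auto.
  intros t Ht. apply (proj2 Hax t Ht).
Qed.

Lemma fDp s : in_I a b s -> is_derive p s (- G s * cos th + T s * q s).
Proof.
  intros Hs. destruct (frame_at _ _ _ _ _ _ _ _ s HF Hs) as (_&_&_&_&_&_&_&_&_&Dmu&_).
  pose proof (dot_derive mu s _ d Dmu) as H0; revert H0. rewrite dot_lin. rewrite (proj2 Hax s Hs). auto.
Qed.

Lemma fDq s : in_I a b s -> is_derive q s (- K s * cos th - T s * p s).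
Proof.
  intros Hs. destruct (frame_at _ _ _ _ _ _ _ _ s HF Hs) as (_&_&_&_&_&_&_&_&_&_&Dnu).
  pose proof (dot_derive nu s _ d Dnu) as H0; revert H0. rewrite dot_lin. rewrite (proj2 Hax s Hs).
  unfold p. replace (- K s * cos th + - T s * dot (mu s) d) with
    (- K s * cos th - T s * dot (mu s) d) by ring. auto.
Qed.

Lemma fE2 s : in_I a b s -> Derive G s * p s + G s * (- G s * cos th + T s * q s)
   + (Derive K s * q s + K s * (- K s * cos th - T s * p s)) = 0.
Proof.
  intros Hs. destruct (frame_GK _ _ _ _ _ _ _ _ s HF Hs) as [HG HK].
  pose proof (der_plus _ _ s _ _ (der_mul _ _ s _ _ HG (fDp s Hs)) (der_mul _ _ s _ _ HK (fDq s Hs))) as H0; revert H0.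
  intros H. apply (deriv_of_const a b _ 0 s) in H; auto.
  intros t Ht. apply fE1; auto.
Qed.

Lemma fPars s : in_I a b s -> cos th ^ 2 + p s ^ 2 + q s ^ 2 = 1.
Proof.
  intros Hs. destruct (frame_at _ _ _ _ _ _ _ _ s HF Hs) as (Hxx&Hmm&Hnn&Hxm&Hxn&Hmn&Hc&_).
  pose proof (parseval d (xi s) (nu s)) as H0; revert H0. rewrite <- Hc.
  rewrite (dot_comm d (mu s)), (dot_comm d (xi s)), (dot_comm d (nu s)), (dot_comm (nu s) (xi s)).
  rewrite Hxx, Hnn, Hxn, (proj2 Hax s Hs), (proj1 Hax). unfold p, q. intros H. nra.
Qed.

End Fwd.

Lemma alg1 (G K p q c0 T g k: R) : G*p + K*q = 0 ->
  g*p + G*(-G*c0 + T*q) + (k*q + K*(-K*c0 - T*p)) = 0 ->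
  c0*(G^2+K^2)^2 = (p*K - q*G) * (g*K - G*k - (G^2+K^2)*T).
Proof.
  intros E1 E2.
  assert (Hid : c0*(G^2+K^2)^2 - (p*K - q*G) * (g*K - G*k - (G^2+K^2)*T)
     = (g*G + k*K)*(G*p + K*q) - (G^2+K^2)*(g*p + G*(-G*c0 + T*q) + (k*q + K*(-K*c0 - T*p)))) by ring.
  rewrite E1, E2 in Hid. lra.
Qed.

Lemma alg2 (G K p q c0 : R) : G*p + K*q = 0 -> c0^2+p^2+q^2 = 1 ->
  (p*K - q*G)^2 = (1 - c0^2)*(G^2+K^2).
Proof.
  intros E1 P. assert (Hid : (p*K - q*G)^2 + (G*p+K*q)^2 = (p^2+q^2)*(G^2+K^2)) by ring.
  rewrite E1 in Hid. replace (p^2+q^2) with (1 - c0^2) in Hid by lra. lra.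
Qed.

Lemma alg3 (A num N2 c0 : R) : 0 < N2 -> c0*N2^2 = A*num ->
  c0 = A / sqrt N2 * (num / Rpower N2 (3/2)).
Proof.
  intros HN2 E. rewrite Rpower32 by auto.
  assert (HN := sqrt_lt_R0 _ HN2).
  assert (HNN := sqrt_sqrt _ (Rlt_le _ _ HN2)).
  set (N := sqrt N2) in *. rewrite <- HNN in E. rewrite <- HNN.
  field_simplify; [|lra]. apply (Rmult_eq_reg_r (N^4)); [|apply pow_nonzero; lra].
  field_simplify; [|lra]. nra.
Qed.

Lemma sincos x : sin x ^ 2 + cos x ^ 2 = 1.
Proof. pose proof (sin2_cos2 x) as H. unfold Rsqr in H. nra. Qed.

Lemma posGK (G K : R) : G <> 0 \/ K <> 0 -> 0 < G^2 + K^2.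
Proof.
  intros [H|H]; [assert (0 < G ^2) by (apply pow2_gt_0; auto); nra|
      assert (0 < K ^2) by (apply pow2_gt_0; auto); nra].
Qed.

Lemma fwd a b xi mu nu G K T d th : Rbar_lt a b -> Darboux_frame a b xi mu nu G K T ->
  (forall s, in_I a b s -> G s <> 0 \/ K s <> 0) -> xi_helix_axis a b xi d th ->
  sin th <> 0 /\ exists e, (e = 1 \/ e = -1) /\
    forall s, in_I a b s -> cos th = e * sin th * sigma_xi G K T s.
Proof.
  intros Hab HF Hnz Hax.
  set (p := fun t => dot (mu t) d). set (q := fun t => dot (nu t) d).
  set (al := fun t => (p t * K t - q t * G t) / sqrt (G t^2 + K t^2)).
  assert (K1 : forall s, in_I a b s -> cos th * (G s^2+K s^2)^2 =
     (p s * K s - q s * G s) * (Derive G s * K s - G s * Derive K s - (G s^2+K s^2)*T s)).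
  { intros s Hs. apply alg1. apply (fE1 a b xi mu nu G K T d th HF Hax s Hs).
    apply (fE2 a b xi mu nu G K T d th HF Hax s Hs). }
  assert (K2 : forall s, in_I a b s -> (p s * K s - q s * G s)^2 = (sin th)^2 * (G s^2+K s^2)).
  { intros s Hs. replace (sin th ^ 2) with (1 - cos th ^2) by (pose proof (sincos th); lra).
    apply alg2. apply (fE1 a b xi mu nu G K T d th HF Hax s Hs).
    pose proof (fPars a b xi mu nu G K T d th HF Hax s Hs). unfold p, q in *; cbv beta in *; lra. }
  assert (K3 : forall s, in_I a b s -> cos th = al s * sigma_xi G K T s).
  { intros s Hs. unfold al, sigma_xi. apply alg3. apply posGK; auto. apply K1; auto. }
  assert (Hc : forall s t, in_I a b s -> in_I a b t -> al s = al t).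
  { apply const_on_I. intros t Ht. destruct (frame_GK _ _ _ _ _ _ _ _ t HF Ht) as [HG HK].
    eapply alpha_der. apply (fDp a b xi mu nu G K T d th HF Hax t Ht).
    apply (fDq a b xi mu nu G K T d th HF Hax t Ht). exact HG. exact HK. auto.
    apply (fE1 a b xi mu nu G K T d th HF Hax t Ht). reflexivity. reflexivity. }
  destruct (I_nonempty a b Hab) as [s0 Hs0].
  assert (HP := posGK _ _ (Hnz s0 Hs0)).
  assert (Hal2 : al s0 ^ 2 = sin th ^ 2).
  { unfold al. assert (HN := sqrt_lt_R0 _ HP).
    assert (HNN := sqrt_sqrt _ (Rlt_le _ _ HP)).
    replace (((p s0 * K s0 - q s0 * G s0) / sqrt (G s0 ^ 2 + K s0 ^ 2)) ^ 2) with
      ((p s0 * K s0 - q s0 * G s0) ^ 2 / (sqrt (G s0 ^ 2 + K s0 ^ 2) * sqrt (G s0 ^ 2 + K s0 ^ 2)))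
      by (field; lra).
    rewrite HNN, K2 by auto. field; lra. }
  assert (Hsin : sin th <> 0).
  { intros H0. rewrite H0 in K2.
    assert (HA : p s0 * K s0 - q s0 * G s0 = 0).
    { pose proof (K2 s0 Hs0). nra. }
    pose proof (fE1 a b xi mu nu G K T d th HF Hax s0 Hs0) as E1.
    assert (Hp0 : p s0 * (G s0^2 + K s0^2) = 0).
    { transitivity (K s0 * (p s0 * K s0 - q s0 * G s0) + G s0 * (G s0 * p s0 + K s0 * q s0)).
      ring. rewrite HA. unfold p, q in *. cbv beta in *. rewrite E1. ring. }
    assert (Hq0 : q s0 * (G s0^2 + K s0^2) = 0).
    { transitivity (- G s0 * (p s0 * K s0 - q s0 * G s0) + K s0 * (G s0 * p s0 + K s0 * q s0)).
      ring. rewrite HA. unfold p, q in *. cbv beta in *. rewrite E1. ring. }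
    assert (p s0 = 0) by (apply Rmult_integral in Hp0; destruct Hp0; auto; lra).
    assert (q s0 = 0) by (apply Rmult_integral in Hq0; destruct Hq0; auto; lra).
    pose proof (fPars a b xi mu nu G K T d th HF Hax s0 Hs0) as Pa.
    pose proof (K1 s0 Hs0) as K10. rewrite HA in K10.
    unfold p, q in *; cbv beta in *.
    assert (cos th = 0).
    { assert (0 < (G s0^2+K s0^2)^2) by (apply pow_lt; auto).
      rewrite Rmult_0_l in K10. apply Rmult_integral in K10; destruct K10; auto; lra. }
    nra. }
  split; auto.
  exists (al s0 / sin th). split.
  { assert (He : (al s0 / sin th)^2 = 1).
    { replace ((al s0 / sin th)^2) with (al s0 ^2 / sin th ^2) by (field; auto).
      rewrite Hal2. field; auto. }
    assert ((al s0 / sin th - 1) * (al s0 / sin th + 1) = 0) by nra.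
    apply Rmult_integral in H; destruct H; [left|right]; lra. }
  intros s Hs. rewrite (K3 s Hs), (Hc s s0 Hs Hs0). field; auto.
Qed.

Lemma dot_comb u x m n al be ga :
  dot u (mk3 (al * v1 x + be * v1 m + ga * v1 n) (al * v2 x + be * v2 m + ga * v2 n)
             (al * v3 x + be * v3 m + ga * v3 n)) = al * dot u x + be * dot u m + ga * dot u n.
Proof. unfold dot, mk3, v1, v2, v3; simpl; ring. Qed.

Lemma bwd a b xi mu nu G K T c : Rbar_lt a b -> Darboux_frame a b xi mu nu G K T ->
  (forall s, in_I a b s -> G s <> 0 \/ K s <> 0) ->
  (forall s, in_I a b s -> sigma_xi G K T s = c) -> xi_helix a b xi.
Proof.
  intros Hab HF Hnz Hsig.
  assert (H1c : 0 < 1 + c^2) by nra.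
  set (a0 := / sqrt (1 + c^2)).
  assert (Ha0 : a0 ^ 2 * (1 + c^2) = 1).
  { unfold a0. assert (HN := sqrt_lt_R0 _ H1c).
    assert (HNN := sqrt_sqrt _ (Rlt_le _ _ H1c)). rewrite <- HNN at 2. field. lra. }
  set (Dc := fun (comp : R3 -> R) t => c*a0 * comp (xi t) + a0 * K t / sqrt(G t^2+K t^2) * comp (mu t)
      + (- a0 * G t / sqrt(G t^2 + K t^2)) * comp (nu t)).
  assert (Hcst : forall comp, (comp = v1 \/ comp = v2 \/ comp = v3) ->
     forall s t, in_I a b s -> in_I a b t -> Dc comp s = Dc comp t).
  { intros comp Hcomp. apply const_on_I. intros t Ht.
    destruct (frame_at _ _ _ _ _ _ _ _ t HF Ht) as (_&_&_&_&_&_&_&_&Dxi&Dmu&Dnu).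
    destruct (frame_GK _ _ _ _ _ _ _ _ t HF Ht) as [HG HK].
    assert (Hs : (Derive G t * K t - G t * Derive K t - (G t ^ 2 + K t ^ 2) * T t) /
       ((G t ^ 2 + K t ^ 2) * sqrt (G t ^ 2 + K t ^ 2)) = c).
    { rewrite <- (Hsig t Ht). unfold sigma_xi. rewrite Rpower32. reflexivity.
      apply posGK; auto. }
    destruct Dxi as (X1&X2&X3), Dmu as (M1&M2&M3), Dnu as (N1&N2&N3).
    unfold Dc.
    destruct Hcomp as [ -> | [ -> | -> ] ].
    - apply (comp_der (fun t => v1 (xi t)) (fun t => v1 (mu t)) (fun t => v1 (nu t)) G K (T t) t c
        (Derive G t) (Derive K t) a0); [exact X1|exact M1|(match goal with |- is_derive _ _ ?l => replace l with (- K t * v1 (xi t) + - T t * v1 (mu t)) by ring; exact N1 end)|exact HG|exact HK|auto|exact Hs].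
    - apply (comp_der (fun t => v2 (xi t)) (fun t => v2 (mu t)) (fun t => v2 (nu t)) G K (T t) t c
        (Derive G t) (Derive K t) a0); [exact X2|exact M2|(match goal with |- is_derive _ _ ?l => replace l with (- K t * v2 (xi t) + - T t * v2 (mu t)) by ring; exact N2 end)|exact HG|exact HK|auto|exact Hs].
    - apply (comp_der (fun t => v3 (xi t)) (fun t => v3 (mu t)) (fun t => v3 (nu t)) G K (T t) t c
        (Derive G t) (Derive K t) a0); [exact X3|exact M3|(match goal with |- is_derive _ _ ?l => replace l with (- K t * v3 (xi t) + - T t * v3 (mu t)) by ring; exact N3 end)|exact HG|exact HK|auto|exact Hs]. }
  destruct (I_nonempty a b Hab) as [s0 Hs0].
  set (d := mk3 (Dc v1 s0) (Dc v2 s0) (Dc v3 s0)).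
  assert (Hd : forall s, in_I a b s -> d = mk3 (Dc v1 s) (Dc v2 s) (Dc v3 s)).
  { intros s Hs. unfold d. rewrite (Hcst v1 (or_introl eq_refl) s0 s Hs0 Hs),
      (Hcst v2 (or_intror (or_introl eq_refl)) s0 s Hs0 Hs),
      (Hcst v3 (or_intror (or_intror eq_refl)) s0 s Hs0 Hs). reflexivity. }
  assert (Hxd : forall s, in_I a b s -> dot (xi s) d = c * a0).
  { intros s Hs. rewrite (Hd s Hs). unfold Dc. rewrite dot_comb.
    destruct (frame_at _ _ _ _ _ _ _ _ s HF Hs) as (Hxx&Hmm&Hnn&Hxm&Hxn&Hmn&_).
    rewrite Hxx, Hxm, Hxn. ring. }
  assert (Hdd : dot d d = (c*a0)^2 + (a0 * K s0 / sqrt(G s0^2+K s0^2))^2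
       + (- a0 * G s0 / sqrt(G s0^2 + K s0^2))^2).
  { pose proof (Hxd s0 Hs0) as Hx0.
    destruct (frame_at _ _ _ _ _ _ _ _ s0 HF Hs0) as (Hxx&Hmm&Hnn&Hxm&Hxn&Hmn&_).
    assert (Hmd : dot (mu s0) d = a0 * K s0 / sqrt(G s0^2+K s0^2)).
    { rewrite (Hd s0 Hs0). unfold Dc. rewrite dot_comb.
      rewrite (dot_comm (mu s0) (xi s0)), Hxm, Hmm, Hmn. ring. }
    assert (Hnd : dot (nu s0) d = - a0 * G s0 / sqrt(G s0^2+K s0^2)).
    { rewrite (Hd s0 Hs0). unfold Dc. rewrite dot_comb.
      rewrite (dot_comm (nu s0) (xi s0)), (dot_comm (nu s0) (mu s0)), Hxn, Hnn, Hmn. ring. }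
    transitivity (dot d (mk3 (Dc v1 s0) (Dc v2 s0) (Dc v3 s0))); [reflexivity|]. unfold Dc. rewrite dot_comb.
    rewrite (dot_comm d (xi s0)), (dot_comm d (mu s0)), (dot_comm d (nu s0)), Hx0, Hmd, Hnd.
    ring. }
  assert (Hdd1 : dot d d = 1).
  { rewrite Hdd. assert (HP := posGK _ _ (Hnz s0 Hs0)).
    assert (HN := sqrt_lt_R0 _ HP).
    assert (HNN := sqrt_sqrt _ (Rlt_le _ _ HP)).
    set (N := sqrt (G s0 ^ 2 + K s0 ^ 2)) in *.
    replace ((c * a0) ^ 2 + (a0 * K s0 / N) ^ 2 + (- a0 * G s0 / N) ^ 2) with
      ((c * a0) ^ 2 + a0^2 * ((G s0^2 + K s0^2)/(N*N))) by (field; lra).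
    rewrite HNN. replace ((G s0 ^ 2 + K s0 ^ 2) / (G s0 ^ 2 + K s0 ^ 2)) with 1 by (field; lra).
    lra. }
  exists d, (acos (c * a0)). split; auto.
  intros s Hs. rewrite cos_acos. apply Hxd; auto.
  assert ((c*a0)^2 <= 1) by nra. split; nra.
Qed.

Theorem theorem6 (a b : Rbar) (xi mu nu : R -> R3) (G K T : R -> R) :
  Rbar_lt a b ->
  Darboux_frame a b xi mu nu G K T ->
  (forall s, in_I a b s -> G s <> 0 \/ K s <> 0) ->
  (xi_helix a b xi <->
     exists c : R, forall s, in_I a b s -> sigma_xi G K T s = c) /\
  (forall (d : R3) (theta : R), xi_helix_axis a b xi d theta ->
     sin theta <> 0 /\
     ((forall s, in_I a b s -> cos theta / sin theta = - sigma_xi G K T s) \/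
      (forall s, in_I a b s -> cos theta / sin theta = sigma_xi G K T s))).
Proof.
  intros Hab HF Hnz. split.
  - split.
    + intros [d [th Hax]].
      destruct (fwd a b xi mu nu G K T d th Hab HF Hnz Hax) as [Hs [e [He Hc]]].
      exists (cos th / (e * sin th)). intros s Hs'. rewrite (Hc s Hs').
      field. split; auto. destruct He; lra.
    + intros [c Hc]. eapply bwd; eauto.
  - intros d th Hax.
    destruct (fwd a b xi mu nu G K T d th Hab HF Hnz Hax) as [Hs [e [He Hc]]].
    split; auto. destruct He as [He|He]; subst e; [right|left]; intros s Hs';
      rewrite (Hc s Hs'); field; auto.
Qed.
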